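(* Let $m=m_n\ge1$ and $F=F_n$ be such that $(F)_2\lesssim(F)_0$ and $\mu=\log n-\frac mn(F)_1\to-\infty$ as $n\to\infty$. Then $H^*_{nmF}$ is connected with probability tending to one.
   Context: Shotgun random hypergraph: given integers $n,m\ge1$ and probability distributions $f^{(1)},\dots,f^{(m)}$ on $\{0,\dots,n\}$, write $F=f^{(1)}\times\cdots\times f^{(m)}$. $H^*_{nmF}$ is the random hypergraph with node set $\{1,\dots,n\}$ and hyperedge set $\{V_1,\dots,V_m\}$, where $V_1,\dots,V_m\subset\{1,\dots,n\}$ are mutually independent and $\mathbb{P}(V_k=A)=f^{(k)}(|A|)\binom{n}{|A|}^{-1}$. A hypergraph on node set $V$ is connected if for every partition of $V$ into nonempty sets $V_1',V_2'$ some hyperedge meets both. Moments: $(F)_r=\frac1m\sum_{k=1}^m\sum_{x=2}^n x^r f^{(k)}(x)$. $a_n\lesssim b_n$ means $\limsup a_n/|b_n|<\infty$. *)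

(* Defs.v *)
From HB Require Import structures.
From mathcomp Require Import all_boot all_order all_algebra.
From mathcomp Require Import all_classical all_reals all_analysis.
Set Implicit Arguments. Unset Strict Implicit. Unset Printing Implicit Defensive.
Import Order.TTheory GRing.Theory Num.Theory.
Local Open Scope ring_scope.

Definition hconnected (n m : nat) (A : {ffun 'I_m -> {set 'I_n}}) : bool :=
  [forall S : {set 'I_n},
     ((S != finset.set0) && (~: S != finset.set0)) ==>
     [exists k : 'I_m, (A k :&: S != finset.set0) && (A k :&: ~: S != finset.set0)]].

(* f k x = f^(k)(x) : distribution of the size of hyperedge k on {0,...,n}. *)
Definition is_size_distr (R : realType) (n : nat) (g : nat -> R) : Prop :=
  (forall x, (x <= n)%N -> 0 <= g x) /\ \sum_(x < n.+1) g x = 1.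

(* P(V_1 = A_1, ..., V_m = A_m) = prod_k f^(k)(|A_k|) / C(n, |A_k|) *)
Definition shotgun_weight (R : realType) (n m : nat) (f : nat -> nat -> R)
    (A : {ffun 'I_m -> {set 'I_n}}) : R :=
  \prod_(k < m) (f k #|A k| / ('C(n, #|A k|))%:R).

Definition prob_connected (R : realType) (n m : nat) (f : nat -> nat -> R) : R :=
  \sum_(A : {ffun 'I_m -> {set 'I_n}} | hconnected A) shotgun_weight f A.

Definition moment (R : realType) (n m : nat) (f : nat -> nat -> R) (r : nat) : R :=
  (m%:R)^-1 * \sum_(k < m) \sum_(2 <= x < n.+1) (x%:R) ^+ r * f k x.

(* Main.v *)
Require Import Defs.
From HB Require Import structures.
From mathcomp Require Import all_boot all_order all_algebra.
From mathcomp Require Import all_classical all_reals all_analysis.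
From mathcomp Require Import ring lra zify.
Import Order.TTheory GRing.Theory Num.Theory numFieldNormedType.Exports.
Local Open Scope ring_scope.

Section Reals.
Variable R : realType.

Lemma pow_1my (y : R) x : 0 <= y -> y <= 1 ->
  (1 - y) ^+ x <= 1 - x%:R * y + x%:R ^+ 2 * y ^+ 2.
Proof.
move=> y0 y1; elim: x => [|x IH]; first by rewrite expr0 expr0n /= !mul0r subr0 addr0.
rewrite exprS -addn1 natrD.
have X0 : (0:R) <= x%:R by [].
apply: le_trans (ler_wpM2l _ IH) _; first lra.
set X := x%:R; nra.
Qed.

Lemma g_lb1 (y : R) x : 0 <= y -> y <= 1 -> (2 <= x)%N ->
  x%:R * y - 2 * x%:R ^+ 2 * y ^+ 2 <= 1 - y ^+ x - (1 - y) ^+ x.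
Proof.
move=> y0 y1 x2.
have h1 := pow_1my y x y0 y1.
have h2 : y ^+ x <= y ^+ 2 by apply: ler_wiXn2l.
have X1 : (1:R) <= x%:R by rewrite ler1n; apply: leq_trans x2.
set X := x%:R in h1 X1 *.
have : y ^+ 2 <= X ^+ 2 * y ^+ 2.
  rewrite -[X in X <= _]mul1r; apply: ler_wpM2r; first exact: sqr_ge0.
  by rewrite -(expr1n _ 2); apply: lerXn2r => //; rewrite ?nnegrE //; lra.
lra.
Qed.

Lemma g_lb2 (y : R) x : 0 <= y -> 2 * y <= 1 -> (2 <= x)%N ->
  y <= 1 - y ^+ x - (1 - y) ^+ x.
Proof.
move=> y0 y1 x2.
have h2 : y ^+ x <= y ^+ 2 by apply: ler_wiXn2l => //; lra.
have h3 : (1 - y) ^+ x <= (1 - y) ^+ 2 by apply: ler_wiXn2l => //; lra.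
nra.
Qed.
End Reals.

Lemma ffact_ratio (a n x : nat) : (a <= n)%N -> (a ^_ x * n ^ x <= n ^_ x * a ^ x)%N.
Proof.
move=> an.
have E : forall c, (c ^ x = \prod_(i < x) c)%N by move=> c; rewrite prod_nat_const card_ord.
rewrite !ffact_prod !E -!big_split /=.
apply: leq_prod => i _.
have := ltn_ord i; nia.
Qed.

Lemma bin_ratio (R : realType) (a n x : nat) : (a <= n)%N ->
  'C(a, x)%:R * (n%:R : R) ^+ x <= 'C(n, x)%:R * (a%:R : R) ^+ x.
Proof.
move=> an; rewrite -!natrX -!natrM ler_nat.
rewrite -(@leq_pmul2r x`!) ?fact_gt0 //.
rewrite mulnAC bin_ffact [X in (_ <= X)%N]mulnAC bin_ffact.
exact: ffact_ratio.
Qed.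

Lemma bin_ratio2 (R : realType) (a n x : nat) : (a <= n)%N -> (x <= n)%N -> (0 < n)%N ->
  ('C(a, x))%:R / ('C(n, x))%:R <= ((a%:R : R) / n%:R) ^+ x.
Proof.
move=> an xn n0.
have C0 : (0 : R) < ('C(n, x))%:R by rewrite ltr0n bin_gt0.
have N0 : (0 : R) < (n%:R) ^+ x by rewrite exprn_gt0 // ltr0n.
rewrite expr_div_n ler_pdivrMr // mulrAC ler_pdivlMr // [X in _ <= X]mulrC.
exact: bin_ratio.
Qed.

Section An.
Variable R : realType.

Lemma ffact_leX (n s : nat) : (n ^_ s <= n ^ s)%N.
Proof.
elim: s => [|s IH]; first by [].
rewrite ffactnSr expnSr; apply: leq_mul => //; exact: leq_subr.
Qed.

Lemma binX (n s : nat) : ('C(n, s) * s`! <= n ^ s)%N.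
Proof. by rewrite bin_ffact ffact_leX. Qed.

Lemma S_pow_le (s : nat) : ((s.+1)%:R : R) ^+ s <= expR 1 * (s%:R) ^+ s.
Proof.
case: s => [|s].
  by rewrite !expr0 mulr1; apply: le_trans (expR_ge1Dx 1); lra.
set t := (s.+1)%:R : R.
have t0 : 0 < t by rewrite /t ltr0n.
have -> : (s.+2)%:R = t * (1 + t^-1).
  by rewrite mulrDr mulr1 divff ?lt0r_neq0 // /t -natr1.
rewrite exprMn mulrC; apply: ler_wpM2r; first by rewrite exprn_ge0 // ltW.
rewrite -{2}(mulfV (lt0r_neq0 t0)) /t expRM_natl -/t.
apply: lerXn2r; rewrite ?nnegrE ?expR_ge0 //.
  by rewrite addr_ge0 // invr_ge0 ltW.
exact: expR_ge1Dx.
Qed.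

Lemma fact_bound (s : nat) : (s%:R : R) ^+ s <= expR (s%:R) * (s`!)%:R.
Proof.
elim: s => [|s IH]; first by rewrite expr0 expR0 mul1r.
rewrite exprS factS natrM -natr1 expRD mulrAC -mulrA.
have h1 := S_pow_le s; rewrite -natr1 in h1.
have e0 : 0 <= expR 1 :> R by exact: expR_ge0.
have h2 : (s%:R + 1) ^+ s <= expR 1 * (expR s%:R * s`!%:R) :> R.
  by apply: le_trans h1 _; apply: ler_wpM2l.
have s0 : (0 : R) <= s%:R + 1 by rewrite natr1.
have := ler_wpM2l s0 h2.
move=> h3; apply: le_trans h3 _; rewrite le_eqVlt; apply/orP; left; apply/eqP.
ring.
Qed.

Lemma per_s (n s : nat) (C l T : R) : (0 < n)%N -> (0 < s)%N -> 1 <= C -> 0 < l -> 0 <= T ->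
  T <= expR (- (l * s%:R - C * l * s%:R ^+ 2 / n%:R)) ->
  T <= expR (- (2 * l * s%:R / C)) ->
  ('C(n, s))%:R * T <= expR (1 + ln (n%:R : R) - l) ^+ s
                       + (expR 1 * C * l * expR (- (2 * l / C))) ^+ s.
Proof.
move=> n0 s0 C1 l0 T0 hA hB.
have nR : (0 : R) < n%:R by rewrite ltr0n.
have sR : (0 : R) < s%:R by rewrite ltr0n.
have C0 : 0 < C by lra.
have Cs : ('C(n, s))%:R * (s`!)%:R <= (n%:R : R) ^+ s.
  by rewrite -natrM -natrX ler_nat binX.
have Bge0 : (0 : R) <= ('C(n, s))%:R by [].
have b0 : 0 <= expR 1 * C * l * expR (- (2 * l / C)).
  by rewrite !mulr_ge0 ?expR_ge0 // ltW.
have a0 : 0 <= expR (1 + ln (n%:R : R) - l) by exact: expR_ge0.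
case: (lerP (C * l * s%:R) n%:R) => hc.
  apply: ler_wpDr; first by rewrite exprn_ge0.
  have h1 : T <= expR (s%:R * (1 - l)).
    apply: le_trans hA _; rewrite ler_expR.
    have : C * l * s%:R ^+ 2 / n%:R <= s%:R.
      rewrite ler_pdivrMr //.
      have := ler_wpM2r (ltW sR) hc; rewrite expr2; lra.
    lra.
  rewrite expRM_natl in h1.
  have h2 : ('C(n, s))%:R <= (n%:R : R) ^+ s.
    apply: le_trans Cs; rewrite -[X in X <= _]mulr1; apply: ler_wpM2l => //.
    by rewrite ler1n fact_gt0.
  apply: le_trans (ler_wpM2l Bge0 h1) _.
  apply: le_trans (ler_wpM2r (exprn_ge0 _ (expR_ge0 _)) h2) _.
  rewrite -exprMn -[X in X * _](lnK nR) -expRD.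
  by rewrite le_eqVlt; apply/orP; left; apply/eqP; congr (expR _ ^+ _); lra.
apply: ler_wpDl; first by rewrite exprn_ge0.
have h1 : T <= expR (- (2 * l / C)) ^+ s.
  by rewrite -expRM_natl; apply: le_trans hB _; rewrite ler_expR; lra.
apply: le_trans (ler_wpM2l Bge0 h1) _.
rewrite [X in _ <= X]exprMn; apply: ler_wpM2r; first by rewrite exprn_ge0 // expR_ge0.
have ss0 : (0 : R) < s%:R ^+ s by rewrite exprn_gt0.
rewrite -(ler_pM2r ss0) -exprMn.
have h3 := fact_bound s.
apply: (@le_trans _ _ (('C(n, s))%:R * (expR s%:R * (s`!)%:R))).
  by apply: ler_wpM2l.
have -> : expR (s%:R) = expR 1 ^+ s :> R by rewrite -expRM_natl mulr1.
rewrite mulrCA; apply: le_trans (ler_wpM2l (exprn_ge0 _ (expR_ge0 _)) Cs) _.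
rewrite -exprMn; apply: lerXn2r; rewrite ?nnegrE ?mulr_ge0 ?expR_ge0 ?ltW //.
by rewrite -!mulrA ltr_pM2l ?expR_gt0 // !mulrA.
Qed.

Lemma geom (a : R) N : 0 <= a -> 2 * a <= 1 -> \sum_(s < N) a ^+ s.+1 <= 2 * a.
Proof.
move=> a0 a1.
suff H : \sum_(s < N) a ^+ s.+1 + 2 * a ^+ N.+1 <= 2 * a.
  by apply: le_trans H; rewrite lerDl mulr_ge0 // exprn_ge0.
elim: N => [|N IH]; first by rewrite big_ord0 add0r expr1.
rewrite big_ord_recr /= -addrA; apply: le_trans IH; rewrite lerD2l.
have h : 0 <= a ^+ N.+1 by rewrite exprn_ge0.
rewrite (exprS a N.+1); nra.
Qed.
End An.

Lemma b_bound (R : realType) (C l d : R) : 1 <= C -> 0 < d ->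
  expR 1 * C ^+ 3 / (2 * d) <= l -> expR 1 * C * l * expR (- (2 * l / C)) <= d.
Proof.
move=> C1 d0 hl.
have C0 : 0 < C by lra.
have e0 : 0 < expR 1 :> R by exact: expR_gt0.
have K0 : 0 < expR 1 * C ^+ 3 / (2 * d).
  by rewrite divr_gt0 ?mulr_gt0 ?exprn_gt0 //; lra.
have l0 : 0 < l by apply: lt_le_trans hl.
have x0 : 0 <= 2 * l / C by rewrite divr_ge0 //; lra.
have ex := expR_ge1Dxn 1 x0.
rewrite expRN; set E := expR (2 * l / C) in ex *.
have E0 : 0 < E by exact: expR_gt0.
rewrite ler_pdivrMr //.
have h1 : expR 1 * C ^+ 3 <= 2 * d * l by rewrite -ler_pdivrMl ?mulr_gt0 //; lra.
have h2 : (2 * l / C) ^+ 2 / (1.+1)`!%:R = 2 * l ^+ 2 / C ^+ 2.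
  have -> : ((1.+1)`!%:R : R) = 2 by [].
  by rewrite expr_div_n; field; rewrite lt0r_neq0.
rewrite h2 in ex.
have h3 : expR 1 * C * l <= d * (2 * l ^+ 2 / C ^+ 2).
  have CC : 0 < C ^+ 2 by rewrite exprn_gt0.
  rewrite mulrA ler_pdivlMr //.
  have -> : expR 1 * C * l * C ^+ 2 = expR 1 * C ^+ 3 * l by ring.
  apply: le_trans (ler_wpM2r (ltW l0) h1) _.
  by rewrite le_eqVlt; apply/orP; left; apply/eqP; ring.
apply: le_trans h3 _; rewrite ler_pM2l //; lra.
Qed.

Section Comb.
Variable R : realType.
Variables (n m : nat) (f : nat -> nat -> R).
Hypothesis hf : forall k, (k < m)%N -> is_size_distr n (f k).

Definition wk (k : nat) (B : {set 'I_n}) : R := f k #|B| / ('C(n, #|B|))%:R.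
Definition cross (S B : {set 'I_n}) : bool :=
  (B :&: S != finset.set0) && (B :&: ~: S != finset.set0).

Lemma sum_by_card (P : pred {set 'I_n}) (F : nat -> R) :
  \sum_(B | P B) F #|B| = \sum_(x < n.+1) #|[set B | P B & #|B| == x]|%:R * F x.
Proof.
have cB : forall B : {set 'I_n}, (#|B| < n.+1)%N.
  by move=> B; rewrite ltnS -[X in (_ <= X)%N](card_ord n); apply: max_card.
rewrite (partition_big (fun B => Ordinal (cB B)) xpredT) //=.
apply: eq_bigr => x _.
rewrite mulr_natl -sumr_const /= [RHS]big_mkcond /= [LHS]big_mkcond /=.
apply: eq_bigr => B _; rewrite inE.
case: (P B) => //=.
case: eqP => [<-|ne]; first by rewrite eqxx.
by case: eqP => // e; case: ne; apply: val_inj.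
Qed.

Lemma hf0 k x : (k < m)%N -> (x <= n)%N -> 0 <= f k x.
Proof. by move=> km xn; case: (hf k km) => h _; apply: h. Qed.

Lemma cardB (B : {set 'I_n}) : (#|B| <= n)%N.
Proof. by rewrite -[X in (_ <= X)%N](card_ord n); apply: max_card. Qed.

Lemma wk_ge0 k B : (k < m)%N -> 0 <= wk k B.
Proof. by move=> km; rewrite /wk divr_ge0 // hf0 // cardB. Qed.

Lemma sum_wk k : (k < m)%N -> \sum_B wk k B = 1.
Proof.
move=> km.
rewrite (sum_by_card xpredT (fun x => f k x / ('C(n, x))%:R)).
transitivity (\sum_(x < n.+1) f k x); last by case: (hf k km).
apply: eq_bigr => x _.
have -> : #|[set B : {set 'I_n} | xpredT B & #|B| == x]| = 'C(n, x).
  by rewrite -[X in 'C(X, _)](card_ord n) -card_draws; apply: eq_card => B; rewrite !inE.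
rewrite mulrC -mulrA mulVf ?mulr1 // pnatr_eq0 -lt0n bin_gt0 -ltnS.
exact: ltn_ord.
Qed.

Local Notation sw := (@shotgun_weight R n m f).

Lemma sw_ge0 A : 0 <= sw A.
Proof. by apply: prodr_ge0 => k _; apply: wk_ge0. Qed.

Lemma sw_sum : \sum_A sw A = 1.
Proof.
rewrite /shotgun_weight -(bigA_distr_bigA (fun (k : 'I_m) B => wk k B)) /=.
by rewrite big1 // => k _; apply: sum_wk.
Qed.

Definition NC (S : {set 'I_n}) (A : {ffun 'I_m -> {set 'I_n}}) : bool :=
  [forall k, ~~ cross S (A k)].
Definition small (S : {set 'I_n}) : bool := (0 < #|S|)%N && (#|S|.*2 <= n)%N.

Lemma nc_sum S : \sum_(A | NC S A) sw A = \prod_(k < m) \sum_(B | ~~ cross S B) wk k B.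
Proof.
rewrite (bigA_distr_big [pred B | ~~ cross S B] (fun (k : 'I_m) B => wk k B)) /=.
apply: eq_bigl => A; rewrite /NC; apply/forallP/ffun_onP => h k; by have := h k.
Qed.

Lemma crossC S B : cross (~: S) B = cross S B.
Proof. by rewrite /cross finset.setCK andbC. Qed.

Lemma disc A : ~~ hconnected A -> exists S, small S && NC S A.
Proof.
rewrite /hconnected negb_forall => /existsP [S].
rewrite negb_imply => /andP [/andP [S0 CS0]].
rewrite negb_exists => /forallP h.
have hS : NC S A by apply/forallP => k; exact: h.
have cS : #|~: S| = (n - #|S|)%N by rewrite cardsCs finset.setCK card_ord.
have p1 : (0 < #|S|)%N by rewrite card_gt0.
have p2 : (0 < #|~: S|)%N by rewrite card_gt0.
have := cardB S.
case: (leqP (#|S|.*2) n) => sn sn'.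
  by exists S; rewrite /small p1 sn hS.
exists (~: S); rewrite /small p2 cS /=; apply/andP; split.
  have L : forall a b : nat, (a < b.*2)%N -> ((a - b).*2 <= a)%N by move=> ??; lia.
  exact: L.
by apply/forallP => k; rewrite crossC; move/forallP: hS; apply.
Qed.

Lemma union_bound :
  1 - prob_connected n m f <= \sum_(S | small S) \sum_(A | NC S A) sw A.
Proof.
rewrite -sw_sum (bigID (fun A => hconnected A)) /= /prob_connected addrC addrK.
apply: (@le_trans _ _ (\sum_(A | ~~ hconnected A) \sum_(S | small S && NC S A) sw A)).
  apply: ler_sum => A hA; have [S0 hS0] := disc A hA.
  rewrite (bigD1 S0) //= lerDl; apply: sumr_ge0 => S _; exact: sw_ge0.
apply: (@le_trans _ _ (\sum_A \sum_(S | small S && NC S A) sw A)).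
  rewrite [X in _ <= X](bigID (fun A => ~~ hconnected A)) /= lerDl.
  by apply: sumr_ge0 => A _; apply: sumr_ge0 => S _; exact: sw_ge0.
rewrite (exchange_big_dep small) /=; last by move=> A S _ /andP [].
apply: ler_sum => S hS; rewrite le_eqVlt; apply/orP; left; apply/eqP.
by apply: eq_bigl => A; rewrite hS.
Qed.

Lemma ncount S x :
  (#|[set B | ~~ cross S B & #|B| == x]| <= 'C(#|S|, x) + 'C(n - #|S|, x))%N.
Proof.
have cS : #|~: S| = (n - #|S|)%N by rewrite cardsCs finset.setCK card_ord.
rewrite -cards_draws -cS -cards_draws.
apply: leq_trans (leq_card_setU _ _); apply: subset_leq_card.
apply/fintype.subsetP => B; rewrite !inE /cross negb_and !negbK => /andP [h ->].
rewrite !andbT !finset.setI_eq0 !finset.disjoints_subset finset.setCK in h *.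
by rewrite orbC.
Qed.

Lemma ncount2 S x : (#|[set B | ~~ cross S B & #|B| == x]| <= 'C(n, x))%N.
Proof.
rewrite -[X in 'C(X, _)](card_ord n) -card_draws.
by apply: subset_leq_card; apply/fintype.subsetP => B; rewrite !inE => /andP [].
Qed.

Lemma edge_bound k (S : {set 'I_n}) (y : R) : (k < m)%N -> (0 < n)%N ->
  y = #|S|%:R / n%:R ->
  \sum_(B | ~~ cross S B) wk k B <=
  1 - \sum_(2 <= x < n.+1) f k x * (1 - y ^+ x - (1 - y) ^+ x).
Proof.
move=> km n0 hy.
have n0R : (0 : R) < n%:R by rewrite ltr0n.
rewrite /wk (sum_by_card (fun B => ~~ cross S B) (fun x => f k x / ('C(n, x))%:R)).
apply: (@le_trans _ _ (\sum_(x < n.+1) f k x - \sum_(2 <= x < n.+1) f k x * (1 - y ^+ x - (1 - y) ^+ x))); last first.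
  by case: (hf k km) => _ ->.
rewrite -!(big_mkord xpredT).
rewrite -(big_mkord xpredT (fun x => (#|[set B | ~~ cross S B & #|B| == x]|%:R : R) * (f k x / ('C(n, x))%:R))).
have n2 : (2 <= n.+1)%N by [].
rewrite !(@big_cat_nat _ _ _ 2 0 n.+1) //= -addrA; apply: lerD.
  rewrite !big_mkord; apply: ler_sum => x _.
  have xn : (x <= n)%N by have := ltn_ord x; case: (x : nat) => // [] [] //.
  rewrite mulrC -mulrA -[X in _ <= X]mulr1; apply: ler_wpM2l; first exact: hf0.
  have C0 : (0 : R) < ('C(n, x))%:R by rewrite ltr0n bin_gt0.
  by rewrite mulrC ler_pdivrMr // mul1r ler_nat ncount2.
rewrite -sumrB; apply: ler_sum_nat => x /andP [x2 xn].
rewrite ltnS in xn.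
have C0 : (0 : R) < ('C(n, x))%:R by rewrite ltr0n bin_gt0.
have sn := cardB S.
rewrite mulrC -mulrA -{2}[f k x]mulr1 -mulrBr; apply: ler_wpM2l; first exact: hf0.
have e1 : 1 - (1 - y ^+ x - (1 - y) ^+ x) = y ^+ x + (1 - y) ^+ x by lra.
rewrite e1.
have e2 : 1 - y = (n - #|S|)%N%:R / n%:R.
  by rewrite hy natrB // mulrBl divff // gt_eqF.
apply: (@le_trans _ _ (('C(#|S|, x) + 'C(n - #|S|, x))%N%:R / ('C(n, x))%:R)).
  rewrite mulrC; apply: ler_wpM2r; first by rewrite invr_ge0 ltW.
  by rewrite ler_nat ncount.
rewrite natrD mulrDl; apply: lerD; first by rewrite hy; exact: bin_ratio2.
rewrite e2; apply: bin_ratio2 => //; exact: leq_subr.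
Qed.

Definition M (r : nat) : R := \sum_(k < m) \sum_(2 <= x < n.+1) (x%:R) ^+ r * f k x.

Lemma S_bound (S : {set 'I_n}) (y : R) : (0 < n)%N -> y = #|S|%:R / n%:R ->
  \sum_(A | NC S A) sw A <=
  expR (- \sum_(k < m) \sum_(2 <= x < n.+1) f k x * (1 - y ^+ x - (1 - y) ^+ x)).
Proof.
move=> n0 hy; rewrite nc_sum -sumrN (big_morph _ (@expRD R) (@expR0 R)).
apply: ler_prod => k _; apply/andP; split.
  by apply: sumr_ge0 => B _; apply: wk_ge0.
apply: le_trans (edge_bound k S y (ltn_ord k) n0 hy) _.
exact: expR_ge1Dx.
Qed.

Lemma sumc_A y : 0 <= y -> y <= 1 ->
  y * M 1 - 2 * y ^+ 2 * M 2 <=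
  \sum_(k < m) \sum_(2 <= x < n.+1) f k x * (1 - y ^+ x - (1 - y) ^+ x).
Proof.
move=> y0 y1; rewrite /M !mulr_sumr -sumrB; apply: ler_sum => k _.
rewrite !mulr_sumr -sumrB; apply: ler_sum_nat => x /andP [x2 xn].
have f0 : 0 <= f k x by apply: hf0 => //; rewrite -ltnS.
have g := @g_lb1 R y x y0 y1 x2.
rewrite -subr_ge0 in g; have := mulr_ge0 f0 g.
rewrite expr1; set X := x%:R in g *; set G := (1 - _ - _) in g *; nra.
Qed.

Lemma sumc_B y : 0 <= y -> 2 * y <= 1 ->
  y * M 0 <=
  \sum_(k < m) \sum_(2 <= x < n.+1) f k x * (1 - y ^+ x - (1 - y) ^+ x).
Proof.
move=> y0 y1; rewrite /M !mulr_sumr; apply: ler_sum => k _.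
rewrite !mulr_sumr; apply: ler_sum_nat => x /andP [x2 xn].
have f0 : 0 <= f k x by apply: hf0 => //; rewrite -ltnS.
have g := @g_lb2 R y x y0 y1 x2.
rewrite -subr_ge0 in g; have := mulr_ge0 f0 g.
rewrite expr0 mul1r; set G := (1 - _ - _) in g *; nra.
Qed.

Lemma M01 : 2 * M 0 <= M 1.
Proof.
rewrite /M !mulr_sumr; apply: ler_sum => k _.
rewrite !mulr_sumr; apply: ler_sum_nat => x /andP [x2 xn].
have f0 : 0 <= f k x by apply: hf0 => //; rewrite -ltnS.
have X2 : (2 : R) <= x%:R by rewrite ler_nat.
rewrite expr0 expr1 mul1r; nra.
Qed.

Lemma M12 : 2 * M 1 <= M 2.
Proof.
rewrite /M !mulr_sumr; apply: ler_sum => k _.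
rewrite !mulr_sumr; apply: ler_sum_nat => x /andP [x2 xn].
have f0 : 0 <= f k x by apply: hf0 => //; rewrite -ltnS.
have X2 : (2 : R) <= x%:R by rewrite ler_nat.
have := mulr_ge0 f0 (ltW (lt_le_trans (ltr0Sn R 1) X2)).
rewrite expr1 expr2; nra.
Qed.

Lemma M1n : M 1 <= n%:R * M 0.
Proof.
rewrite /M !mulr_sumr; apply: ler_sum => k _.
rewrite !mulr_sumr; apply: ler_sum_nat => x /andP [x2 xn].
have f0 : 0 <= f k x by apply: hf0 => //; rewrite -ltnS.
have X2 : (x%:R : R) <= n%:R by rewrite ler_nat -ltnS.
rewrite expr0 expr1 mul1r; nra.
Qed.

Lemma subr_ge0_helper (x y : R) : x <= y -> 0 <= y - x.
Proof. by rewrite subr_ge0. Qed.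

Lemma core (C l a b : R) : (0 < n)%N -> 1 <= C -> M 2 <= C * M 0 -> 0 < M 1 ->
  l = M 1 / n%:R -> a = expR (1 + ln (n%:R : R) - l) ->
  b = expR 1 * C * l * expR (- (2 * l / C)) ->
  2 * a <= 1 -> 2 * b <= 1 ->
  1 - prob_connected n m f <= 2 * a + 2 * b.
Proof.
move=> n0 C1 M20 M10 hl ha hb a1 b1.
have nR : (0 : R) < n%:R by rewrite ltr0n.
have l0 : 0 < l by rewrite hl divr_gt0.
have C0 : 0 < C by lra.
have a0 : 0 <= a by rewrite ha expR_ge0.
have b0 : 0 <= b by rewrite hb !mulr_ge0 ?expR_ge0 // ltW.
have m01 := M01; have m12 := M12.
have hT : forall S, small S -> \sum_(A | NC S A) sw A <=
    (a ^+ #|S| + b ^+ #|S|) / ('C(n, #|S|))%:R.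
  move=> S /andP [s0 s2].
  set y := (#|S|%:R / n%:R : R).
  have y0 : 0 <= y by rewrite /y divr_ge0.
  have y2 : 2 * y <= 1.
    rewrite /y mulrA ler_pdivrMr // mul1r.
    have : ((#|S|.*2)%:R : R) <= n%:R by rewrite ler_nat.
    by rewrite -muln2 natrM mulrC.
  have y1 : y <= 1 by lra.
  have T0 : 0 <= \sum_(A | NC S A) sw A by apply: sumr_ge0 => A _; exact: sw_ge0.
  have hS := S_bound S y n0 (erefl y).
  have sy : #|S|%:R = y * n%:R by rewrite /y divfK ?lt0r_neq0.
  have hA : \sum_(A | NC S A) sw A <=
      expR (- (l * #|S|%:R - C * l * #|S|%:R ^+ 2 / n%:R)).
    apply: le_trans hS _; rewrite ler_expR lerN2.
    apply: le_trans (sumc_A y y0 y1).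
    have e1 : l * #|S|%:R = y * M 1 by rewrite hl sy; field; rewrite lt0r_neq0.
    have e2 : C * l * #|S|%:R ^+ 2 / n%:R = C * y ^+ 2 * M 1.
      by rewrite hl sy; field; rewrite lt0r_neq0.
    rewrite e1 e2.
    have yy : 0 <= y ^+ 2 by rewrite sqr_ge0.
    have h1 := mulr_ge0 yy (subr_ge0_helper _ _ M20).
    have h2 := mulr_ge0 (mulr_ge0 (ltW C0) yy) (subr_ge0_helper _ _ m01).
    nra.
  have hB : \sum_(A | NC S A) sw A <= expR (- (2 * l * #|S|%:R / C)).
    apply: le_trans hS _; rewrite ler_expR lerN2.
    apply: le_trans (sumc_B y y0 y2).
    have e1 : 2 * l * #|S|%:R / C = y * (2 * M 1 / C).
      by rewrite hl sy; field; rewrite !lt0r_neq0.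
    rewrite e1; apply: ler_wpM2l => //.
    rewrite ler_pdivrMr //; nra.
  have := @per_s R n #|S| C l _ n0 s0 C1 l0 T0 hA hB.
  by rewrite -ha -hb ler_pdivlMr ?ltr0n ?bin_gt0 ?cardB // mulrC.
apply: le_trans (union_bound) _.
apply: le_trans (ler_sum _ hT) _.
rewrite (sum_by_card small (fun s => (a ^+ s + b ^+ s) / ('C(n, s))%:R)).
apply: (@le_trans _ _ (\sum_(x < n.+1) (if (0 < x)%N then a ^+ x + b ^+ x else 0))).
  apply: ler_sum => x _; case: ifP => x0.
    have C0' : (0 : R) < ('C(n, x))%:R by rewrite ltr0n bin_gt0 -ltnS.
    rewrite mulrCA -[X in _ <= X]mulr1 ler_wpM2l ?addr_ge0 ?exprn_ge0 //.

    rewrite ler_pdivrMr // mul1r ler_nat.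
    rewrite -[X in 'C(X, _)](card_ord n) -card_draws.
    by apply: subset_leq_card; apply/fintype.subsetP => B; rewrite !inE => /andP [].
  have -> : #|[set B | small B & #|B| == x]| = 0%N.
    apply/eqP; rewrite cards_eq0; apply/eqP/setP => B; rewrite !inE /small.
    by case: (#|B| =P x) => [e|]; rewrite ?andbF // e x0.
  by rewrite mul0r.
rewrite big_ord_recl /= add0r.
have -> : \sum_(i < n) (if (0 < bump 0 i)%N then a ^+ bump 0 i + b ^+ bump 0 i else 0)
   = \sum_(i < n) (a ^+ i.+1 + b ^+ i.+1) by apply: eq_bigr.
by rewrite big_split /=; apply: lerD; apply: geom.
Qed.

Lemma pc_le1 : prob_connected n m f <= 1.
Proof.
rewrite -sw_sum (bigID (fun A => hconnected A)) /= /prob_connected lerDl.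
by apply: sumr_ge0 => A _; exact: sw_ge0.
Qed.

Lemma momentE r : moment n m f r = (m%:R)^-1 * M r.
Proof. by []. Qed.
End Comb.

Local Open Scope classical_set_scope.

Theorem mainTheorem14 (R : realType) (m : nat -> nat)
  (f : nat -> nat -> nat -> R) :
  (forall n, (1 <= m n)%N) ->
  (forall n k, (k < m n)%N -> is_size_distr n (f n k)) ->
  (exists C : R, \forall n \near \oo,
      moment n (m n) (f n) 2 / `|moment n (m n) (f n) 0| <= C) ->
  (ln (n%:R : R) - (m n)%:R / n%:R * moment n (m n) (f n) 1
     @[n --> \oo] --> -oo) ->
  prob_connected n (m n) (f n) @[n --> \oo] --> (1 : R).
Proof.
move=> H1 H2 [C H3] H4.
apply/cvgrPdist_le => eps eps0.
set C' := Num.max C 1.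
have C'1 : 1 <= C' by rewrite le_max lexx orbT.
have CC' : C <= C' by rewrite le_max lexx.
have C'0 : 0 < C' by lra.
set d := Num.min (1 / 4) (eps / 4).
have d0 : 0 < d by rewrite lt_min; apply/andP; split; lra.
have d1 : d <= 1 / 4 by rewrite ge_min lexx.
have d2 : d <= eps / 4 by rewrite ge_min lexx orbT.
set K := expR 1 * C' ^+ 3 / (2 * d).
have K0 : 0 < K by rewrite /K divr_gt0 ?mulr_gt0 ?expR_gt0 ?exprn_gt0 //; lra.
set A := Num.min (- 1) (Num.min (ln d - 1) (- K)).
have A1 : A <= -1 by rewrite ge_min lexx.
have A2 : A <= ln d - 1 by rewrite /A !ge_min lexx !orbT.
have A3 : A <= - K by rewrite /A !ge_min lexx !orbT.
have E0 : \forall n \near \oo, (1 <= n)%N by exists 1%N.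
have E2 := cvgrNy_le H4 A.
near=> n.
have n1 : (1 <= n)%N by near: n; exact: E0.
have hr : moment n (m n) (f n) 2 / `|moment n (m n) (f n) 0| <= C by near: n; exact: H3.
have hmu : ln (n%:R : R) - (m n)%:R / n%:R * moment n (m n) (f n) 1 <= A by near: n; exact: E2.
have n0 : (0 < n)%N := n1.
have hfn := H2 n.
have mR : (0 : R) < (m n)%:R by rewrite ltr0n; apply: H1.
have nR : (0 : R) < n%:R by rewrite ltr0n.
set M0 := M R n (m n) (f n) 0.
set M1 := M R n (m n) (f n) 1.
set M2 := M R n (m n) (f n) 2.
set l := M1 / n%:R.
have hl : (m n)%:R / n%:R * moment n (m n) (f n) 1 = l.
  by rewrite momentE /l /M1; field; rewrite !lt0r_neq0.
rewrite hl in hmu.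
have lnn : 0 <= ln (n%:R : R) by rewrite ln_ge0 // ler1n.
have l1 : 1 <= l by lra.
have M1pos : 0 < M1.
  have : M1 = l * n%:R by rewrite /l divfK ?lt0r_neq0.
  move=> ->; rewrite mulr_gt0 //; lra.
have M1n' := @M1n _ _ _ _ hfn.
have M0pos : 0 < M0.
  rewrite -/M0 -/M1 in M1n'.
  have : 0 < n%:R * M0 by apply: lt_le_trans M1n'.
  by rewrite pmulr_rgt0.
have mom0 : 0 < moment n (m n) (f n) 0 by rewrite momentE mulr_gt0 // invr_gt0.
rewrite gtr0_norm // ler_pdivrMr // !momentE -/M0 -/M2 in hr.
have M20 : M2 <= C' * M0.
  have : M2 <= C * M0.
    have mi : 0 < (m n)%:R^-1 :> R by rewrite invr_gt0.
    by rewrite -(ler_pM2l mi) mulrCA.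
  move=> h; apply: le_trans h _; apply: ler_wpM2r => //; exact: ltW.
set a := expR (1 + ln (n%:R : R) - l).
set b := expR 1 * C' * l * expR (- (2 * l / C')).
have ha : a <= d.
  rewrite /a -[X in _ <= X](lnK d0) ler_expR; lra.
have hb : b <= d.
  apply: b_bound => //.
  rewrite -/K; lra.
have hc := @core _ _ _ _ hfn _ _ _ _ n0 C'1 M20 M1pos (erefl l) (erefl a) (erefl b) ltac:(lra) ltac:(lra).
have := @pc_le1 _ _ _ _ hfn.
rewrite -subr_ge0 => h0.
rewrite ger0_norm //; lra.
Unshelve. all: by end_near.
Qed.
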